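(* Let $X$ be a connected, locally compact Polish space with a partial order $\le$ whose strict part is $<$, and suppose there is $M\subseteq X$ such that: (i) $M$ has at least two elements, is connected, and is totally ordered by $<$; (ii) for every $m\in M$ and every neighborhood $U$ of $m$ in $X$ there are $\underline m,\overline m\in M$ with $m\in[\underline m,\overline m]\subseteq U$, where moreover $\overline m$ can be chosen with $m<\overline m$ if $m$ is not the largest element of $M$, and $\underline m$ can be chosen with $\underline m<m$ if $m$ is not the smallest element of $M$; (iii) for every bounded sequence $(x_n)$ in $X$ there are $\underline m,\overline m\in M$ with $\underline m\le x_n\le\overline m$ for all sufficiently large $n$. Let $\succeq$ be a continuous strictly monotone preference on $X$. Then for every $x\in X$ there is a unique $m^*(x)\in M$ with $x\sim m^*(x)$. Moreover, for any continuous strictly increasing $u:X\to\mathbb{R}$, the function $u_\succeq(x)=u(m^*(x))$ is a continuous utility representation of $\succeq$.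
   Context: $[\underline m,\overline m]=\{z\in X:\underline m\le z\le\overline m\}$. A preference is a complete transitive binary relation; continuous if closed in $X\times X$; strictly monotone if $y<x$ implies $x\succ y$; $x\sim y$ means $x\succeq y$ and $y\succeq x$. A function $u$ is strictly increasing if $x<y$ implies $u(x)<u(y)$; it represents $\succeq$ if $x\succeq y\iff u(x)\ge u(y)$. Boundedness in (iii) refers to a metric compatible with the topology of $X$. *)

(* Defs.v *)
From HB Require Import structures.
From mathcomp Require Import all_boot all_order all_algebra.
From mathcomp Require Import all_classical all_reals all_analysis.
Set Implicit Arguments. Unset Strict Implicit. Unset Printing Implicit Defensive.
Import Order.TTheory GRing.Theory Num.Theory.
Import numFieldTopology.Exports numFieldNormedType.Exports.
Local Open Scope classical_set_scope.
Local Open Scope ring_scope.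

Definition is_metric {R : realType} {X : Type} (d : X -> X -> R) : Prop :=
  (forall x y, 0 <= d x y) /\ (forall x y, d x y = 0 <-> x = y) /\
  (forall x y, d x y = d y x) /\ (forall x y z, d x z <= d x y + d y z).

Definition compatible_metric {R : realType} {X : topologicalType}
  (d : X -> X -> R) : Prop :=
  is_metric d /\
  forall A : set X, open A <->
    (forall x, A x -> exists2 e : R, 0 < e & [set y | d x y < e] `<=` A).

Definition complete_metric {R : realType} {X : topologicalType}
  (d : X -> X -> R) : Prop :=
  forall s : nat -> X,
    (forall e : R, 0 < e -> exists N : nat, forall n m : nat,
        (N <= n)%N -> (N <= m)%N -> d (s n) (s m) < e) ->
    exists l : X, s @ \oo --> l.

Definition separable_space (X : topologicalType) : Prop :=
  exists D : set X, countable D /\ closure D = setT.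

Definition polish (R : realType) (X : topologicalType) : Prop :=
  separable_space X /\
  exists d : X -> X -> R, compatible_metric d /\ complete_metric d.

Definition partial_order {X : Type} (le : X -> X -> Prop) : Prop :=
  (forall x, le x x) /\ (forall x y, le x y -> le y x -> x = y) /\
  (forall x y z, le x y -> le y z -> le x z).

Definition strict {X : Type} (le : X -> X -> Prop) (x y : X) : Prop :=
  le x y /\ x <> y.

Definition oint {X : Type} (le : X -> X -> Prop) (a b : X) : set X :=
  [set z | le a z /\ le z b].

Definition preference {X : Type} (pref : X -> X -> Prop) : Prop :=
  (forall x y, pref x y \/ pref y x) /\
  (forall x y z, pref x y -> pref y z -> pref x z).

Definition continuous_pref {X : topologicalType} (pref : X -> X -> Prop) : Prop :=
  closed [set p : X * X | pref p.1 p.2].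

Definition spref {X : Type} (pref : X -> X -> Prop) (x y : X) : Prop :=
  pref x y /\ ~ pref y x.

Definition indiff {X : Type} (pref : X -> X -> Prop) (x y : X) : Prop :=
  pref x y /\ pref y x.

Definition strictly_monotone {X : Type} (le : X -> X -> Prop)
  (pref : X -> X -> Prop) : Prop :=
  forall x y, strict le y x -> spref pref x y.

Definition strictly_increasing {R : realType} {X : Type}
  (le : X -> X -> Prop) (u : X -> R) : Prop :=
  forall x y, strict le x y -> u x < u y.

Definition represents {R : realType} {X : Type} (pref : X -> X -> Prop)
  (u : X -> R) : Prop :=
  forall x y, pref x y <-> u y <= u x.

Definition bounded_seq {R : realType} {X : Type} (d : X -> X -> R)
  (s : nat -> X) : Prop :=
  exists x0 : X, exists r : R, forall n, d x0 (s n) <= r.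

(* Main.v *)
Require Import Defs.
From HB Require Import structures.
From mathcomp Require Import all_boot all_order all_algebra.
From mathcomp Require Import all_classical all_reals all_analysis.
Import Order.TTheory GRing.Theory Num.Theory.
Import numFieldTopology.Exports numFieldNormedType.Exports.
Local Open Scope classical_set_scope.
Local Open Scope ring_scope.
Lemma sec1 (X : topologicalType) (P : X -> X -> Prop) c :
  closed [set p : X * X | P p.1 p.2] -> closed [set x | P x c].
Proof.
move=> cS.
have -> : [set x | P x c] = (fun x => (x, c)) @^-1` [set p : X * X | P p.1 p.2] by [].
apply: (continuous_closedP _).1 => // x.
by apply: cvg_pair; [exact: cvg_id | exact: cvg_cst].
Qed.

Lemma sec2 (X : topologicalType) (P : X -> X -> Prop) c :
  closed [set p : X * X | P p.1 p.2] -> closed [set x | P c x].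
Proof.
move=> cS.
have -> : [set x | P c x] = (fun x => (c, x)) @^-1` [set p : X * X | P p.1 p.2] by [].
apply: (continuous_closedP _).1 => // x.
by apply: cvg_pair; [exact: cvg_cst | exact: cvg_id].
Qed.

Lemma opn (X : topologicalType) (A : set X) x : open A -> A x -> nbhs x A.
Proof. by move=> oA Ax; apply: open_nbhs_nbhs. Qed.

Theorem lemma13 (R : realType) (X : topologicalType)
  (d : X -> X -> R) (le : X -> X -> Prop) (M : set X)
  (pref : X -> X -> Prop) :
  connected [set: X] ->
  locally_compact [set: X] ->
  polish R X ->
  compatible_metric d ->
  partial_order le ->
  (* (i) *)
  (exists m1 m2, M m1 /\ M m2 /\ m1 <> m2) ->
  connected M ->
  (forall m m', M m -> M m' -> m <> m' -> strict le m m' \/ strict le m' m) ->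
  (* (ii) *)
  (forall m, M m -> forall U : set X, nbhs m U ->
     exists lo hi, [/\ M lo /\ M hi, oint le lo hi m, oint le lo hi `<=` U,
       ((exists m', M m' /\ strict le m m') -> strict le m hi) &
       ((exists m', M m' /\ strict le m' m) -> strict le lo m)]) ->
  (* (iii) *)
  (forall s : nat -> X, bounded_seq d s ->
     exists lo hi, M lo /\ M hi /\
       exists N : nat, forall n, (N <= n)%N -> le lo (s n) /\ le (s n) hi) ->
  preference pref -> continuous_pref pref -> strictly_monotone le pref ->
  (forall x, exists! m, M m /\ indiff pref x m) /\
  (forall mstar : X -> X, (forall x, M (mstar x) /\ indiff pref x (mstar x)) ->
   forall u : X -> R, continuous u -> strictly_increasing le u ->
     continuous (fun x => u (mstar x)) /\ represents pref (fun x => u (mstar x))).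
Proof.
move=> _ _ _ [[_ [dE _]] _] [leR [leA leT]] _ cM tot nbM bnd [cpl trP] cP smon.
have prefR : forall x, pref x x by move=> x; case: (cpl x x).
have le_pref : forall x y, le y x -> pref x y.
  move=> x y lyx; case: (pselect (x = y)) => [->|nxy]; first exact: prefR.
  by have [] := smon x y (conj lyx (fun e => nxy (esym e))).
have ord1 : forall a b, pref a b -> ~ strict le a b.
  by move=> a b pab sab; have [_] := smon b a sab.
have ord2 : forall a b, M a -> M b -> ~ pref a b -> strict le a b.
  move=> a b Ma Mb npab; case: (pselect (a = b)) => [eab|nab].
    by exfalso; apply: npab; rewrite eab.
  case: (tot a b Ma Mb nab) => // sba.
  by exfalso; apply: npab; have [] := smon a b sba.
split.
  move=> x.
  have [lo [hi [Mlo [Mhi [N HN]]]]] : exists lo hi, M lo /\ M hi /\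
       exists N : nat, forall n, (N <= n)%N -> le lo ((fun _ : nat => x) n) /\
         le ((fun _ : nat => x) n) hi.
    apply: bnd; exists x, 0 => n; by rewrite ((dE x x).2 erefl).
  have [lox xhi] := HN N (leqnn N).
  have : exists m, M m /\ indiff pref x m.
    apply: contrapT => nex.
    have E : (M `&` [set m | ~ pref m x]) = M.
      apply: cM.
      - exists lo; split => // plo; apply: nex; exists lo; split => //.
        by split => //; exact: le_pref.
      - exists (~` [set m | pref m x]) => //.
        exact: closed_openC (@sec1 X pref _ cP).
      - exists [set m | pref x m]; first exact: (@sec2 X pref _ cP).
        apply/seteqP; split => m [Mm H]; split => //=.
          by case: (cpl x m) => // pmx.
        by move=> pmx; apply: nex; exists m.
    have : (M `&` [set m | ~ pref m x]) hi by rewrite E.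
    by move=> [_]; apply; exact: le_pref.
  move=> [m [Mm im]]; exists m; split => // m' [Mm' im'].
  apply: contrapT => nmm'.
  case: (tot m m' Mm Mm' nmm') => s.
    by apply: (ord1 m m' _ s); apply: trP im.2 im'.1.
  by apply: (ord1 m' m _ s); apply: trP im'.2 im.1.
move=> ms Hms u cu iu.
have pms : forall x y, pref x y <-> pref (ms x) (ms y).
  move=> x y; split => p.
    by apply: (trP _ x); [exact: (Hms x).2.2 | apply: (trP _ y) => //; exact: (Hms y).2.1].
  by apply: (trP _ (ms x)); [exact: (Hms x).2.1 | apply: (trP _ (ms y)) => //; exact: (Hms y).2.2].
split; last first.
  move=> x y; rewrite pms; split => p.
    case: (pselect (ms x = ms y)) => [->|nxy]; first exact: lexx.
    case: (tot _ _ (Hms x).1 (Hms y).1 nxy) => s.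
      by exfalso; exact: ord1 p s.
    exact/ltW/iu.
  apply: contrapT => np.
  have := iu _ _ (ord2 _ _ (Hms x).1 (Hms y).1 np).
  by rewrite ltNge p.
move=> x0; apply/cvgrPdist_lt => e e0.
set m0 := ms x0.
have Mm0 : M m0 by exact: (Hms x0).1.
have : \forall t \near m0, `|u m0 - u t| < e.
  by move: (cu m0) => /cvgrPdist_lt; apply.
move=> /(nbM m0 Mm0) [lo [hi [[Mlo Mhi] [lom0 m0hi] sub hup hlo]]].
have Hhi : \forall x \near x0, le (ms x) hi.
  case: (pselect (exists m', M m' /\ strict le m0 m')) => [ex|nex].
    have sh := hup ex.
    have A : nbhs x0 (~` [set x | pref x hi]).
      apply: opn; first exact: closed_openC (@sec1 X pref _ cP).
      move=> /= px0; apply: (ord1 m0 hi) => //.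
      by apply: (trP _ x0) => //; exact: (Hms x0).2.2.
    apply: filterS A => x /= npx.
    have np : ~ pref (ms x) hi.
      by move=> p; apply: npx; apply: (trP _ (ms x)) => //; exact: (Hms x).2.1.
    exact: (ord2 _ _ (Hms x).1 Mhi np).1.
  apply: nearW => x.
  case: (pselect (ms x = m0)) => [->//|nx].
  case: (tot _ _ (Hms x).1 Mm0 nx) => s.
    exact: leT s.1 m0hi.
  by exfalso; apply: nex; exists (ms x); split => //; exact: (Hms x).1.
have Hlo : \forall x \near x0, le lo (ms x).
  case: (pselect (exists m', M m' /\ strict le m' m0)) => [ex|nex].
    have sh := hlo ex.
    have A : nbhs x0 (~` [set x | pref lo x]).
      apply: opn; first exact: closed_openC (@sec2 X pref _ cP).
      move=> /= px0; apply: (ord1 lo m0) => //.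
      by apply: (trP _ x0) => //; exact: (Hms x0).2.1.
    apply: filterS A => x /= npx.
    have np : ~ pref lo (ms x).
      by move=> p; apply: npx; apply: (trP _ (ms x)) => //; exact: (Hms x).2.2.
    exact: (ord2 _ _ Mlo (Hms x).1 np).1.
  apply: nearW => x.
  case: (pselect (ms x = m0)) => [->//|nx].
  case: (tot _ _ (Hms x).1 Mm0 nx) => s.
    by exfalso; apply: nex; exists (ms x); split => //; exact: (Hms x).1.
  exact: leT lom0 s.1.
by apply: filterS (filterI Hlo Hhi) => x [a b]; apply: sub.
Qed.
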